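(* For every integer $n\ge0$, the Franel number $\sum_{k=0}^n\binom{n}{k}^3$ equals the coefficient of $x_1^nx_2^nx_3^n$ in the Taylor expansion of $$\frac{1}{1-(x_1+x_2+x_3)+4x_1x_2x_3}.$$ Moreover, for $n_1,n_2,n_3\ge0$, the coefficient of $x_1^{n_1}x_2^{n_2}x_3^{n_3}$ in this rational function equals the coefficient of $x_1^{n_1}x_2^{n_2}x_3^{n_3}$ in $(x_1-x_2-x_3)^{n_1}(x_2-x_1-x_3)^{n_2}(x_3-x_1-x_2)^{n_3}$. *)

(* Defs.v *)
From HB Require Import structures.
From mathcomp Require Import all_boot all_order all_algebra.
Set Implicit Arguments. Unset Strict Implicit. Unset Printing Implicit Defensive.
Import Order.TTheory GRing.Theory Num.Theory.
Local Open Scope ring_scope.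

(* s a b c = coefficient of x1^a x2^b x3^c *)
Definition series3 := nat -> nat -> nat -> int.

Definition smono (e1 e2 e3 : nat) : series3 :=
  fun a b c => if [&& a == e1, b == e2 & c == e3] then 1 else 0.

Definition sone : series3 := smono 0 0 0.
Definition sX1 : series3 := smono 1 0 0.
Definition sX2 : series3 := smono 0 1 0.
Definition sX3 : series3 := smono 0 0 1.

Definition sadd (f g : series3) : series3 := fun a b c => f a b c + g a b c.
Definition sopp (f : series3) : series3 := fun a b c => - f a b c.
Definition ssub (f g : series3) : series3 := sadd f (sopp g).
Definition sscale (r : int) (f : series3) : series3 := fun a b c => r * f a b c.

Definition smul (f g : series3) : series3 := fun a b c =>
  \sum_(i < a.+1) \sum_(j < b.+1) \sum_(k < c.+1)
     f i j k * g (a - i)%N (b - j)%N (c - k)%N.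

Definition spow (f : series3) (n : nat) : series3 := iter n (smul f) sone.

Definition denom : series3 :=
  sadd (ssub sone (sadd (sadd sX1 sX2) sX3)) (sscale 4 (smono 1 1 1)).

Definition prodpoly (n1 n2 n3 : nat) : series3 :=
  smul (smul (spow (ssub (ssub sX1 sX2) sX3) n1)
             (spow (ssub (ssub sX2 sX1) sX3) n2))
       (spow (ssub (ssub sX3 sX1) sX2) n3).

Definition franel (n : nat) : nat := (\sum_(k < n.+1) 'C(n, k) ^ 3)%N.

(* Main.v *)
Require Import Defs.
From HB Require Import structures.
From mathcomp Require Import all_boot all_order all_algebra.
From mathcomp Require Import ring lra zify.
From Stdlib Require Import FunctionalExtensionality.
Import GRing.Theory Num.Theory.
Local Open Scope ring_scope.

Lemma funext3 (f g : series3) : (forall a b c, f a b c = g a b c) -> f = g.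
Proof.
move=> H; apply: functional_extensionality => a.
apply: functional_extensionality => b; apply: functional_extensionality => c.
exact: H.
Qed.

Notation R3 := {poly {poly {poly int}}}.
Definition toS (p : R3) : series3 := fun a b c => ((p`_a)`_b)`_c.
Definition X1 : R3 := 'X.
Definition X2 : R3 := ('X)%:P.
Definition X3 : R3 := ('X%:P)%:P.

Lemma toS_mul p q : toS (p * q) = smul (toS p) (toS q).
Proof.
apply: funext3 => a b c; rewrite /toS /smul coefM (@coef_sum {poly int}) (@coef_sum int).
apply: eq_bigr => i _; rewrite coefM (@coef_sum int).
apply: eq_bigr => j _; rewrite coefM.
by [].
Qed.

Lemma toS_add p q : toS (p + q) = sadd (toS p) (toS q).
Proof. by apply: funext3 => a b c; rewrite /toS /sadd !coefD. Qed.
Lemma toS_opp p : toS (- p) = sopp (toS p).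
Proof. by apply: funext3 => a b c; rewrite /toS /sopp !coefN. Qed.
Lemma toS_sub p q : toS (p - q) = ssub (toS p) (toS q).
Proof. by rewrite toS_add toS_opp. Qed.
Lemma toS_1 : toS 1 = sone.
Proof.
apply: funext3 => a b c; rewrite /toS /sone /smono coef1.
by case: (a == 0%N); rewrite ?coef0 ?coef1 //; case: (b == 0%N); rewrite ?coef0 ?coef1 //; case: (c == 0%N).
Qed.
Lemma toS_X1 : toS X1 = sX1.
Proof.
apply: funext3 => a b c; rewrite /toS /sX1 /smono /X1 coefX.
by case: (a == 1%N); rewrite ?coef0 ?coef1 //; case: (b == 0%N); rewrite ?coef0 ?coef1 //; case: (c == 0%N).
Qed.
Lemma toS_X2 : toS X2 = sX2.
Proof.
apply: funext3 => a b c; rewrite /toS /sX2 /smono /X2 coefC.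
case: (a == 0%N); rewrite ?coef0 //= coefX.
by case: (b == 1%N); rewrite ?coef0 ?coef1 //; case: (c == 0%N).
Qed.
Lemma toS_X3 : toS X3 = sX3.
Proof.
apply: funext3 => a b c; rewrite /toS /sX3 /smono /X3 coefC.
case: (a == 0%N); rewrite ?coef0 //= coefC.
case: (b == 0%N); rewrite ?coef0 //= coefX.
by case: (c == 1%N).
Qed.

Lemma spow_toS p n : spow (toS p) n = toS (p ^+ n).
Proof.
elim: n => [|n IH]; first by rewrite expr0 toS_1.
by rewrite /spow iterS -/(spow _ n) IH exprS toS_mul.
Qed.

Definition P1 : R3 := X1 - X2 - X3.
Definition P2 : R3 := X2 - X1 - X3.
Definition P3 : R3 := X3 - X1 - X2.

Lemma prodpolyE n1 n2 n3 :
  prodpoly n1 n2 n3 = toS (P1 ^+ n1 * P2 ^+ n2 * P3 ^+ n3).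
Proof.
rewrite /prodpoly !toS_mul -!spow_toS /P1 /P2 /P3 !toS_sub toS_X1 toS_X2 toS_X3.
reflexivity.
Qed.

Lemma toS_X1M p a b c : toS (X1 * p) a b c = if a is a'.+1 then toS p a' b c else 0.
Proof. by rewrite /toS /X1 coefXM; case: a => [|a] /=; rewrite ?coef0. Qed.
Lemma toS_X2M p a b c : toS (X2 * p) a b c = if b is b'.+1 then toS p a b' c else 0.
Proof. by rewrite /toS /X2 coefCM coefXM; case: b => [|b] /=; rewrite ?coef0. Qed.
Lemma toS_X3M p a b c : toS (X3 * p) a b c = if c is c'.+1 then toS p a b c' else 0.
Proof. by rewrite /toS /X3 coefCM coefCM coefXM; case: c => [|c] /=; rewrite ?coef0. Qed.
Lemma toS_addE p q a b c : toS (p + q) a b c = toS p a b c + toS q a b c.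
Proof. by rewrite toS_add. Qed.
Lemma toS_subE p q a b c : toS (p - q) a b c = toS p a b c - toS q a b c.
Proof. by rewrite toS_sub. Qed.
Lemma toS_MnE p n a b c : toS (p *+ n) a b c = toS p a b c *+ n.
Proof. by rewrite /toS !coefMn. Qed.

Definition lhsR (G : series3) (a b c : nat) : int :=
  G a b c - (if (0 < a)%N then G a.-1 b c else 0)
          - (if (0 < b)%N then G a b.-1 c else 0)
          - (if (0 < c)%N then G a b c.-1 else 0)
          + (if [&& (0 < a)%N, (0 < b)%N & (0 < c)%N] then 4 * G a.-1 b.-1 c.-1 else 0).

Definition Qf : series3 := fun a b c => toS (P1 ^+ a * P2 ^+ b * P3 ^+ c) a b c.

Lemma Qf_rec a b c : lhsR Qf a b c = sone a b c.
Proof.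
rewrite /lhsR /Qf /sone /smono.
case: a => [|a]; case: b => [|b]; case: c => [|c] /=.
- by rewrite !expr0 !mulr1 /toS !coef1 /=; ring.
- have -> : P1 ^+ 0 * P2 ^+ 0 * P3 ^+ c.+1 =
     X3 * (P1 ^+ 0 * P2 ^+ 0 * P3 ^+ c) - X1 * (P3 ^+ c) - X2 * (P3 ^+ c).
    by rewrite !exprS !expr0; move: (P3 ^+ c) => C; rewrite /P3; ring.
  by rewrite !toS_subE toS_X3M toS_X1M toS_X2M; ring.
- have -> : P1 ^+ 0 * P2 ^+ b.+1 * P3 ^+ 0 =
     X2 * (P1 ^+ 0 * P2 ^+ b * P3 ^+ 0) - X1 * (P2 ^+ b) - X3 * (P2 ^+ b).
    by rewrite !exprS !expr0; move: (P2 ^+ b) => B; rewrite /P2; ring.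
  by rewrite !toS_subE toS_X3M toS_X1M toS_X2M; ring.
- have -> : P1 ^+ 0 * P2 ^+ b.+1 * P3 ^+ c.+1 =
     X2 * (P1 ^+ 0 * P2 ^+ b * P3 ^+ c.+1) + X3 * (P1 ^+ 0 * P2 ^+ b.+1 * P3 ^+ c)
     + X1 * (P2 ^+ b * P3 ^+ c * (X1 + X2 + X3)).
    by rewrite !exprS !expr0; move: (P2 ^+ b) (P3 ^+ c) => B C; rewrite /P2 /P3; ring.
  by rewrite !toS_addE toS_X3M toS_X1M toS_X2M; ring.
- have -> : P1 ^+ a.+1 * P2 ^+ 0 * P3 ^+ 0 =
     X1 * (P1 ^+ a * P2 ^+ 0 * P3 ^+ 0) - X2 * (P1 ^+ a) - X3 * (P1 ^+ a).
    by rewrite !exprS !expr0; move: (P1 ^+ a) => A; rewrite /P1; ring.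
  by rewrite !toS_subE toS_X3M toS_X1M toS_X2M; ring.
- have -> : P1 ^+ a.+1 * P2 ^+ 0 * P3 ^+ c.+1 =
     X1 * (P1 ^+ a * P2 ^+ 0 * P3 ^+ c.+1) + X3 * (P1 ^+ a.+1 * P2 ^+ 0 * P3 ^+ c)
     + X2 * (P1 ^+ a * P3 ^+ c * (X1 + X2 + X3)).
    by rewrite !exprS !expr0; move: (P1 ^+ a) (P3 ^+ c) => A C; rewrite /P1 /P3; ring.
  by rewrite !toS_addE toS_X3M toS_X1M toS_X2M; ring.
- have -> : P1 ^+ a.+1 * P2 ^+ b.+1 * P3 ^+ 0 =
     X1 * (P1 ^+ a * P2 ^+ b.+1 * P3 ^+ 0) + X2 * (P1 ^+ a.+1 * P2 ^+ b * P3 ^+ 0)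
     + X3 * (P1 ^+ a * P2 ^+ b * (X1 + X2 + X3)).
    by rewrite !exprS !expr0; move: (P1 ^+ a) (P2 ^+ b) => A B; rewrite /P1 /P2; ring.
  by rewrite !toS_addE toS_X3M toS_X1M toS_X2M; ring.
- have -> : P1 ^+ a.+1 * P2 ^+ b.+1 * P3 ^+ c.+1 =
     X1 * (P1 ^+ a * P2 ^+ b.+1 * P3 ^+ c.+1) + X2 * (P1 ^+ a.+1 * P2 ^+ b * P3 ^+ c.+1)
     + X3 * (P1 ^+ a.+1 * P2 ^+ b.+1 * P3 ^+ c)
     - X1 * (X2 * (X3 * (P1 ^+ a * P2 ^+ b * P3 ^+ c)))
     - X1 * (X2 * (X3 * (P1 ^+ a * P2 ^+ b * P3 ^+ c)))
     - X1 * (X2 * (X3 * (P1 ^+ a * P2 ^+ b * P3 ^+ c)))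
     - X1 * (X2 * (X3 * (P1 ^+ a * P2 ^+ b * P3 ^+ c))).
    by rewrite !exprS; move: (P1 ^+ a) (P2 ^+ b) (P3 ^+ c) => A B C; rewrite /P1 /P2 /P3; ring.
  by rewrite !toS_subE !toS_addE !toS_X1M !toS_X2M !toS_X3M; ring.
Qed.

Lemma smul_addr f g h : smul f (sadd g h) = sadd (smul f g) (smul f h).
Proof.
apply: funext3 => a b c; rewrite /smul /sadd -big_split; apply: eq_bigr => i _.
rewrite -big_split; apply: eq_bigr => j _; rewrite -big_split; apply: eq_bigr => k _.
by rewrite mulrDr.
Qed.
Lemma smul_oppr f g : smul f (sopp g) = sopp (smul f g).
Proof.
apply: funext3 => a b c; rewrite /smul /sopp -sumrN; apply: eq_bigr => i _.
rewrite -sumrN; apply: eq_bigr => j _; rewrite -sumrN; apply: eq_bigr => k _.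
by rewrite mulrN.
Qed.
Lemma smul_scaler f r g : smul f (sscale r g) = sscale r (smul f g).
Proof.
apply: funext3 => a b c; rewrite /smul /sscale mulr_sumr; apply: eq_bigr => i _.
rewrite mulr_sumr; apply: eq_bigr => j _; rewrite mulr_sumr; apply: eq_bigr => k _.
by rewrite mulrCA.
Qed.

Lemma sum1 (F : nat -> int) a e :
  \sum_(i < a.+1) (if (a - i == e)%N then 1 else 0) * F i = if (e <= a)%N then F (a - e)%N else 0.
Proof.
case: leqP => h.
- have hlt : (a - e < a.+1)%N by rewrite ltnS leq_subr.
  rewrite (bigD1 (Ordinal hlt)) //= subKn // eqxx mul1r big1 ?addr0 // => j hj.
  case: eqP => [hje|]; last by rewrite mul0r.
  exfalso; move: hj; apply/negP; rewrite negbK; apply/eqP/val_inj => /=.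
  have := ltn_ord j; lia.
- rewrite big1 // => i _; case: eqP => [hie|]; last by rewrite mul0r.
  exfalso; have := ltn_ord i; lia.
Qed.

Lemma smul_mono f e1 e2 e3 a b c :
  smul f (smono e1 e2 e3) a b c =
  if (e1 <= a)%N then if (e2 <= b)%N then if (e3 <= c)%N then f (a - e1)%N (b - e2)%N (c - e3)%N
  else 0 else 0 else 0.
Proof.
rewrite /smul /smono.
transitivity (\sum_(i < a.+1) (if (a - i == e1)%N then 1 else 0) *
   \sum_(j < b.+1) (if (b - j == e2)%N then 1 else 0) *
   \sum_(k < c.+1) (if (c - k == e3)%N then 1 else 0) * f i j k).
  apply: eq_bigr => i _; rewrite mulr_sumr; apply: eq_bigr => j _.
  rewrite mulr_sumr mulr_sumr; apply: eq_bigr => k _.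
  by case: (a - i == e1)%N; case: (b - j == e2)%N; case: (c - k == e3)%N => /=;
    rewrite ?mul0r ?mul1r ?mulr0 ?mulr1.
under eq_bigr => i _ do under eq_bigr => j _ do rewrite (sum1 (fun k => f i j k)).
under eq_bigr => i _ do rewrite (sum1 (fun j => if (e3 <= c)%N then f i j (c - e3)%N else 0)).
by rewrite (sum1 (fun i => if (e2 <= b)%N then if (e3 <= c)%N then f i (b - e2)%N (c - e3)%N else 0 else 0)).
Qed.

Lemma smul_denom G a b c : smul G denom a b c = lhsR G a b c.
Proof.
rewrite /denom /ssub !smul_addr smul_scaler smul_oppr !smul_addr.
rewrite /sadd /sscale /sopp /sone /sX1 /sX2 /sX3 !smul_mono /lhsR.
case: a => [|a]; case: b => [|b]; case: c => [|c] /=; rewrite ?subn0 ?subn1 /=; ring.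
Qed.

Lemma denom_iff G : smul G denom = sone <-> forall a b c, lhsR G a b c = sone a b c.
Proof.
split=> [H a b c|H]; first by rewrite -smul_denom H.
by apply: funext3 => a b c; rewrite smul_denom H.
Qed.

Lemma rec_unique G H : (forall a b c, lhsR G a b c = sone a b c) ->
  (forall a b c, lhsR H a b c = sone a b c) -> forall a b c, G a b c = H a b c.
Proof.
move=> hG hH.
suff: forall s a b c, (a + b + c <= s)%N -> G a b c = H a b c.
  by move=> S a b c; apply: (S (a + b + c)%N).
elim=> [|s IH] a b c hs.
  have [-> ->] : a = 0%N /\ b = 0%N by lia.
  have -> : c = 0%N by lia.
  by move: (hG 0%N 0%N 0%N) (hH 0%N 0%N 0%N); rewrite /lhsR /sone /smono /= => h1 h2; lia.
have := hG a b c; have := hH a b c; rewrite /lhsR => eH eG.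
have e1 : (if (0 < a)%N then G a.-1 b c else 0) = (if (0 < a)%N then H a.-1 b c else 0).
  by case: ifP => // ha; apply: IH; lia.
have e2 : (if (0 < b)%N then G a b.-1 c else 0) = (if (0 < b)%N then H a b.-1 c else 0).
  by case: ifP => // hb; apply: IH; lia.
have e3 : (if (0 < c)%N then G a b c.-1 else 0) = (if (0 < c)%N then H a b c.-1 else 0).
  by case: ifP => // hc; apply: IH; lia.
have e4 : (if [&& (0 < a)%N, (0 < b)%N & (0 < c)%N] then 4 * G a.-1 b.-1 c.-1 else 0)
        = (if [&& (0 < a)%N, (0 < b)%N & (0 < c)%N] then 4 * H a.-1 b.-1 c.-1 else 0).
  case: ifP => // /and3P [ha hb hc]; rewrite IH //; lia.
rewrite e1 e2 e3 e4 in eG.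
move: eG eH; set u1 := (if _ then _ else _); set u2 := (if _ then _ else _).
set u3 := (if _ then _ else _); set u4 := (if _ then _ else _); lia.
Qed.

Definition M4 (i j k l : nat) : nat :=
  ('C(i + (j + (k + l)), i) * 'C(j + (k + l), j) * 'C(k + l, k))%N.

Lemma M4_fact i j k l : (M4 i j k l * (i`! * j`! * k`! * l`!))%N = (i + (j + (k + l)))`!.
Proof.
have h3 : ('C(k + l, k) * (k`! * l`!))%N = (k + l)`!.
  by have := @bin_fact (k + l) k (leq_addr _ _); rewrite addKn.
have h2 : ('C(j + (k + l), j) * (j`! * (k + l)`!))%N = (j + (k + l))`!.
  by have := @bin_fact (j + (k + l)) j (leq_addr _ _); rewrite addKn.
have h1 : ('C(i + (j + (k + l)), i) * (i`! * (j + (k + l))`!))%N = (i + (j + (k + l)))`!.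
  by have := @bin_fact (i + (j + (k + l))) i (leq_addr _ _); rewrite addKn.
rewrite -h1 -h2 -h3 /M4; ring.
Qed.

Lemma M4_unique x i j k l :
  (x * (i`! * j`! * k`! * l`!))%N = (i + (j + (k + l)))`! -> x = M4 i j k l.
Proof.
move=> h; apply/eqP; rewrite -(@eqn_pmul2r (i`! * j`! * k`! * l`!)).
  by rewrite h M4_fact.
by rewrite !muln_gt0 !fact_gt0.
Qed.

Lemma M4_swap12 i j k l : M4 i j k l = M4 j i k l.
Proof. symmetry; apply: M4_unique; have -> : (i`! * j`! * k`! * l`! = j`! * i`! * k`! * l`!)%N by ring.
rewrite M4_fact; congr (_`!)%N; lia. Qed.
Lemma M4_swap13 i j k l : M4 i j k l = M4 k j i l.
Proof. symmetry; apply: M4_unique; have -> : (i`! * j`! * k`! * l`! = k`! * j`! * i`! * l`!)%N by ring.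
rewrite M4_fact; congr (_`!)%N; lia. Qed.
Lemma M4_swap14 i j k l : M4 i j k l = M4 l j k i.
Proof. symmetry; apply: M4_unique; have -> : (i`! * j`! * k`! * l`! = l`! * j`! * k`! * i`!)%N by ring.
rewrite M4_fact; congr (_`!)%N; lia. Qed.

Lemma M4_pas1 i j k l : (0 < i)%N ->
  ((i + (j + (k + l))) * M4 i.-1 j k l = i * M4 i j k l)%N.
Proof.
case: i => // i _ /=; apply/eqP.
rewrite -(@eqn_pmul2r (i`! * j`! * k`! * l`!)); last by rewrite !muln_gt0 !fact_gt0.
have -> : (i.+1 * M4 i.+1 j k l * (i`! * j`! * k`! * l`!)
   = M4 i.+1 j k l * (i.+1`! * j`! * k`! * l`!))%N by rewrite factS; ring.
have -> : ((i.+1 + (j + (k + l))) * M4 i j k l * (i`! * j`! * k`! * l`!)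
   = (i.+1 + (j + (k + l))) * (M4 i j k l * (i`! * j`! * k`! * l`!)))%N by ring.
by rewrite !M4_fact addSn factS.
Qed.

Lemma M4_pas i j k l : (0 < i + (j + (k + l)))%N ->
  M4 i j k l = ((if (0 < i)%N then M4 i.-1 j k l else 0)
             + (if (0 < j)%N then M4 i j.-1 k l else 0)
             + (if (0 < k)%N then M4 i j k.-1 l else 0)
             + (if (0 < l)%N then M4 i j k l.-1 else 0))%N.
Proof.
move=> hN; apply/eqP; rewrite -(@eqn_pmul2l (i + (j + (k + l)))) //.
have e1 : ((i + (j + (k + l))) * (if (0 < i)%N then M4 i.-1 j k l else 0) = i * M4 i j k l)%N.
  by case: ifP => h; [rewrite M4_pas1 | move: h; clear; case: i => // _; rewrite muln0].
have e2 : ((i + (j + (k + l))) * (if (0 < j)%N then M4 i j.-1 k l else 0) = j * M4 i j k l)%N.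
  case: ifP => h; last by move: h; clear; case: j => // _; rewrite muln0.
  rewrite (M4_swap12 i j.-1) (M4_swap12 i j) -M4_pas1 //; congr (_ * _)%N; lia.
have e3 : ((i + (j + (k + l))) * (if (0 < k)%N then M4 i j k.-1 l else 0) = k * M4 i j k l)%N.
  case: ifP => h; last by move: h; clear; case: k => // _; rewrite muln0.
  rewrite (M4_swap13 i j k.-1) (M4_swap13 i j k) -M4_pas1 //; congr (_ * _)%N; lia.
have e4 : ((i + (j + (k + l))) * (if (0 < l)%N then M4 i j k l.-1 else 0) = l * M4 i j k l)%N.
  case: ifP => h; last by move: h; clear; case: l => // _; rewrite muln0.
  rewrite (M4_swap14 i j k l.-1) (M4_swap14 i j k l) -M4_pas1 //; congr (_ * _)%N; lia.
by rewrite !mulnDr e1 e2 e3 e4 -!mulnDl !addnA.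
Qed.

Definition W (t a b c : nat) : nat :=
  if [&& (t <= a)%N, (t <= b)%N & (t <= c)%N] then M4 t (a - t) (b - t) (c - t) else 0%N.

Lemma W_rec t a b c : (0 < a + b + c)%N ->
  W t a b c = ((if [&& (0 < a)%N, (0 < b)%N & (0 < c)%N] then
                 (if (0 < t)%N then W t.-1 a.-1 b.-1 c.-1 else 0) else 0)
             + (if (0 < a)%N then W t a.-1 b c else 0)
             + (if (0 < b)%N then W t a b.-1 c else 0)
             + (if (0 < c)%N then W t a b c.-1 else 0))%N.
Proof.
move=> habc; rewrite /W.
case: ifP => hm; last first.
  move/negbT: hm; rewrite !negb_and => hm.
  repeat (case: ifP => ?); lia.
move/and3P: hm => [ha hb hc].
rewrite M4_pas; last by lia.
congr (_ + _ + _ + _)%N.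
- case: t ha hb hc => [|t] ha hb hc /=; first by case: ifP.
  rewrite ifT; last by apply/and3P; split; lia.
  rewrite ifT; last by apply/and3P; split; lia.
  congr M4; lia.
- case: ifP => h1; case: ifP => h2 //; try lia.
  + rewrite ifT; last by apply/and3P; split; lia.
    congr M4; lia.
  + rewrite ifF //; apply/negbTE; rewrite !negb_and; lia.
- case: ifP => h1; case: ifP => h2 //; try lia.
  + rewrite ifT; last by apply/and3P; split; lia.
    congr M4; lia.
  + rewrite ifF //; apply/negbTE; rewrite !negb_and; lia.
- case: ifP => h1; case: ifP => h2 //; try lia.
  + rewrite ifT; last by apply/and3P; split; lia.
    congr M4; lia.
  + rewrite ifF //; apply/negbTE; rewrite !negb_and; lia.
Qed.

Definition Ef : series3 := fun a b c => \sum_(t < a.+1) (-4) ^+ t * (W t a b c)%:Z.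

Lemma Ef_widen a b c K : (a < K)%N ->
  \sum_(t < K) (-4) ^+ t * (W t a b c)%:Z = Ef a b c.
Proof.
move=> hK; rewrite /Ef (@big_ord_widen _ _ _ a.+1 K (fun t => (-4) ^+ t * (W t a b c)%:Z)) //.
rewrite [RHS]big_mkcond; apply: eq_bigr => t _; case: ifP => // h.
rewrite /W ifF ?mulr0 //; apply/negbTE; rewrite !negb_and; lia.
Qed.

Lemma Ef_rec a b c : lhsR Ef a b c = sone a b c.
Proof.
rewrite /lhsR /sone /smono.
case: (posnP (a + b + c)) => habc.
  have [-> [-> ->]] : a = 0%N /\ b = 0%N /\ c = 0%N by lia.
  by rewrite /Ef /= big_ord1 /W /= /M4 !subnn !bin0 /= expr0 mul1r; lia.
rewrite [RHS]ifF; last by apply/negbTE; rewrite !negb_and; lia.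
have -> : Ef a b c =
   \sum_(t < a.+1) (-4) ^+ t * (if [&& (0 < a)%N, (0 < b)%N & (0 < c)%N] then
                 (if (0 < t)%N then W t.-1 a.-1 b.-1 c.-1 else 0) else 0)%:Z
 + \sum_(t < a.+1) (-4) ^+ t * (if (0 < a)%N then W t a.-1 b c else 0)%:Z
 + \sum_(t < a.+1) (-4) ^+ t * (if (0 < b)%N then W t a b.-1 c else 0)%:Z
 + \sum_(t < a.+1) (-4) ^+ t * (if (0 < c)%N then W t a b c.-1 else 0)%:Z.
  rewrite /Ef -!big_split; apply: eq_bigr => t _ /=.
  by rewrite (W_rec t a b c habc) !PoszD; ring.
have -> : \sum_(t < a.+1) (-4) ^+ t * (if (0 < a)%N then W t a.-1 b c else 0)%:Z
        = if (0 < a)%N then Ef a.-1 b c else 0.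
  case: ifP => ha; last by rewrite big1 // => t _; rewrite mulr0.
  by rewrite Ef_widen //; lia.
have -> : \sum_(t < a.+1) (-4) ^+ t * (if (0 < b)%N then W t a b.-1 c else 0)%:Z
        = if (0 < b)%N then Ef a b.-1 c else 0.
  by case: ifP => hb; [ | rewrite big1 // => t _; rewrite mulr0].
have -> : \sum_(t < a.+1) (-4) ^+ t * (if (0 < c)%N then W t a b c.-1 else 0)%:Z
        = if (0 < c)%N then Ef a b c.-1 else 0.
  by case: ifP => hc; [ | rewrite big1 // => t _; rewrite mulr0].
have -> : \sum_(t < a.+1) (-4) ^+ t * (if [&& (0 < a)%N, (0 < b)%N & (0 < c)%N] then
                 (if (0 < t)%N then W t.-1 a.-1 b.-1 c.-1 else 0) else 0)%:Z
   = if [&& (0 < a)%N, (0 < b)%N & (0 < c)%N] then - 4 * Ef a.-1 b.-1 c.-1 else 0.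
  case: ifP => h; last by rewrite big1 // => t _; rewrite mulr0.
  case: a h habc => // a h _ /=.
  rewrite big_ord_recl /= mulr0 add0r /Ef.
  under eq_bigr => t _ do rewrite /bump /= add0n exprS -mulrA.
  by rewrite -mulr_sumr.
case: ifP => _; ring.
Qed.

Lemma wz_rec (T : nat -> nat -> rat) (G : nat -> nat -> rat) (s a0 a1 a2 : nat -> rat) n :
  (forall n m, (n < m)%N -> T n m = 0) ->
  (forall m, (m < n.+3)%N -> s n * (a0 n * T n m + a1 n * T n.+1 m + a2 n * T n.+2 m)
                  = G n m.+1 - G n m) ->
  G n n.+3 = 0 -> G n 0%N = 0 -> s n != 0 ->
  a0 n * (\sum_(m < n.+1) T n m) + a1 n * (\sum_(m < n.+2) T n.+1 m)
    + a2 n * (\sum_(m < n.+3) T n.+2 m) = 0.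
Proof.
move=> T0 hwz G3 G0 s0.
have wid : forall k K, (k < K)%N -> \sum_(m < K) T k m = \sum_(m < k.+1) T k m.
  move=> k K hK; rewrite (@big_ord_widen _ _ _ k.+1 K (T k)) // [RHS]big_mkcond.
  apply: eq_bigr => m _; case: ifP => // h; rewrite T0 //; lia.
rewrite -(wid n n.+3); last lia.
rewrite -(wid n.+1 n.+3); last lia.
apply/eqP; rewrite -(mulrI_eq0 _ (lregP s0)); apply/eqP.
have h : \sum_(m < n.+3) (G n m.+1 - G n m)
   = \sum_(m < n.+3) s n * (a0 n * T n m + a1 n * T n.+1 m + a2 n * T n.+2 m).
  by apply: eq_bigr => m _; rewrite hwz.
rewrite -(big_mkord xpredT (fun m => G n m.+1 - G n m)) telescope_sumr // G3 G0 subr0 in h.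
rewrite -mulr_sumr !big_split /= -!mulr_sumr in h.
by rewrite -h.
Qed.

Definition ra0g {R : fieldType} (N : R) : R := - 8 * (N + 1) ^+ 2.
Definition ra1g {R : fieldType} (N : R) : R := - (7 * N ^+ 2 + 21 * N + 16).
Definition ra2g {R : fieldType} (N : R) : R := (N + 2) ^+ 2.
Definition ra0 (n : nat) : rat := ra0g n%:R.
Definition ra1 (n : nat) : rat := ra1g n%:R.
Definition ra2 (n : nat) : rat := ra2g n%:R.

Lemma natS1 n : (n.+1%:R : rat) = n%:R + 1.
Proof. by rewrite -addn1 natrD. Qed.
Lemma natS2 n : (n.+2%:R : rat) = n%:R + 2.
Proof. by rewrite -addn2 natrD. Qed.

Lemma rel_c1 n k : ('C(n.+1, k)%:R : rat) = 'C(n.+2, k)%:R * (n%:R + 2 - k%:R) / (n%:R + 2).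
Proof.
have nz : (n%:R + 2 : rat) != 0 by rewrite -natS2 pnatr_eq0.
apply: (mulIf nz); rewrite mulfVK //.
case: (leqP k n.+2) => h.
  by rewrite -natS2 -natrB // -!natrM mulnC mul_bin_down mulnC.
by rewrite !bin_small ?mul0r //; lia.
Qed.

Lemma rel_c0 n k : ('C(n, k)%:R : rat) = 'C(n.+1, k)%:R * (n%:R + 1 - k%:R) / (n%:R + 1).
Proof.
have nz : (n%:R + 1 : rat) != 0 by rewrite -natS1 pnatr_eq0.
apply: (mulIf nz); rewrite mulfVK //.
case: (leqP k n.+1) => h.
  by rewrite -natS1 -natrB // -!natrM mulnC mul_bin_down mulnC.
by rewrite !bin_small ?mul0r //; lia.
Qed.

Lemma rel_d n k : ('C(n.+1, k)%:R : rat) = k.+1%:R * 'C(n.+2, k.+1)%:R / (n%:R + 2).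
Proof.
have nz : (n%:R + 2 : rat) != 0 by rewrite -natS2 pnatr_eq0.
apply: (mulIf nz); rewrite mulfVK //.
by rewrite -natS2 -!natrM mulnC (mul_bin_diag n.+2 k).
Qed.

Definition pF {R : fieldType} (N K : R) : R :=
  (-72 - 200 * N - 202 * N ^+ 2 - 88 * N ^+ 3 - 14 * N ^+ 4)
  + (78 + 171 * N + 120 * N ^+ 2 + 27 * N ^+ 3) * K
  + (-30 - 48 * N - 18 * N ^+ 2) * K ^+ 2 + (4 + 4 * N) * K ^+ 3.

Lemma idF (R : fieldType) (N K B0 B1 B Gk : R) :
  N + 1 != 0 -> N + 2 != 0 ->
  B1 = B * (N + 2 - K) / (N + 2) -> B0 = B1 * (N + 1 - K) / (N + 1) ->
  Gk = K ^+ 3 * B ^+ 3 * pF N K / (N + 2) ^+ 3 ->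
  (N + 1) ^+ 2 * (ra0g N * B0 ^+ 3 + ra1g N * B1 ^+ 3 + ra2g N * B ^+ 3)
  = B1 ^+ 3 * pF N (K + 1) - Gk.
Proof.
move=> h1 h2 e1 e0 eg; rewrite eg e0 e1 /pF /ra0g /ra1g /ra2g; field; by apply/andP.
Qed.

Definition Tf (n k : nat) : rat := ('C(n, k)%:R) ^+ 3.
Definition Gfr (n k : nat) : rat :=
  if k is k'.+1 then ('C(n.+1, k')%:R) ^+ 3 * pF n%:R k%:R else 0.

Lemma Gfr_eq n k : Gfr n k = k%:R ^+ 3 * ('C(n.+2, k)%:R) ^+ 3 * pF n%:R k%:R / (n%:R + 2) ^+ 3.
Proof.
case: k => [|k]; first by rewrite /Gfr exprS !mul0r.
rewrite /Gfr rel_d.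
move: (n%:R + 2 : rat) (k.+1%:R : rat) ('C(n.+2, k.+1)%:R : rat) (pF n%:R k.+1%:R) => a b c d.
by rewrite expr_div_n exprMn mulrAC.
Qed.

Lemma wz_franel n k :
  (n%:R + 1) ^+ 2 * (ra0 n * Tf n k + ra1 n * Tf n.+1 k + ra2 n * Tf n.+2 k)
  = Gfr n k.+1 - Gfr n k.
Proof.
have nz2 : (n%:R + 2 : rat) != 0 by rewrite -natS2 pnatr_eq0.
have nz1 : (n%:R + 1 : rat) != 0 by rewrite -natS1 pnatr_eq0.
rewrite /ra0 /ra1 /ra2 /Tf [Gfr n k.+1]/Gfr (natS1 k).
exact: (@idF rat _ _ _ _ _ _ nz1 nz2 (rel_c1 n k) (rel_c0 n k) (Gfr_eq n k)).
Qed.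


Definition Dn (n m : nat) : nat := ('C(n + 2 * m, n) * 'C(2 * m, m))%N.
Definition Te (n m : nat) : rat := (-4) ^+ (n - m) * 'C(n, m)%:R * (Dn n m)%:R.
Definition cG {R : fieldType} (N : R) : R := -3 * (3 * N + 5).
Definition Ge (n m : nat) : rat :=
  cG n%:R * m%:R ^+ 2 * (-4) ^+ (n.+2 - m) * 'C(n.+1, m.-1)%:R * (Dn n m)%:R.

Lemma Dn_fact n m : (Dn n m * (n`! * (m`! * m`!)))%N = (n + 2 * m)`!.
Proof.
have h1 : ('C(2 * m, m) * (m`! * m`!))%N = (2 * m)`!.
  by have := @bin_fact (2 * m) m (ltac:(lia)); rewrite (_ : (2 * m - m = m)%N) //; lia.
have h2 : ('C(n + 2 * m, n) * (n`! * (2 * m)`!))%N = (n + 2 * m)`!.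
  by have := @bin_fact (n + 2 * m) n (leq_addr _ _); rewrite addKn.
rewrite -h2 -h1 /Dn; ring.
Qed.

Lemma Dn_S n m : (n.+1 * Dn n.+1 m = (n.+1 + 2 * m) * Dn n m)%N.
Proof.
apply/eqP; rewrite -(@eqn_pmul2r (n`! * (m`! * m`!))); last by rewrite !muln_gt0 !fact_gt0.
have -> : (n.+1 * Dn n.+1 m * (n`! * (m`! * m`!)) = Dn n.+1 m * (n.+1`! * (m`! * m`!)))%N
  by rewrite factS; ring.
have -> : ((n.+1 + 2 * m) * Dn n m * (n`! * (m`! * m`!))
          = (n.+1 + 2 * m) * (Dn n m * (n`! * (m`! * m`!))))%N by ring.
by rewrite !Dn_fact addSn factS.
Qed.

Lemma Dn_mS n m : ((m.+1 * m.+1) * Dn n m.+1 = (n + 2 * m).+1 * (n + 2 * m).+2 * Dn n m)%N.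
Proof.
apply/eqP; rewrite -(@eqn_pmul2r (n`! * (m`! * m`!))); last by rewrite !muln_gt0 !fact_gt0.
have -> : (m.+1 * m.+1 * Dn n m.+1 * (n`! * (m`! * m`!)) = Dn n m.+1 * (n`! * (m.+1`! * m.+1`!)))%N
  by rewrite factS; ring.
have -> : ((n + 2 * m).+1 * (n + 2 * m).+2 * Dn n m * (n`! * (m`! * m`!))
          = (n + 2 * m).+2 * ((n + 2 * m).+1 * (Dn n m * (n`! * (m`! * m`!)))))%N by ring.
rewrite !Dn_fact -!factS; apply/eqP; f_equal; lia.
Qed.

Lemma relD1 n m : ((Dn n.+1 m)%:R : rat) = (Dn n m)%:R * (n%:R + 1 + 2 * m%:R) / (n%:R + 1).
Proof.
have nz : (n%:R + 1 : rat) != 0 by rewrite -natS1 pnatr_eq0.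
apply: (mulIf nz); rewrite mulfVK // -natS1.
have -> : (n.+1%:R + 2 * m%:R : rat) = (n.+1 + 2 * m)%:R by rewrite natrD natrM.
by rewrite -!natrM mulnC Dn_S mulnC.
Qed.

Lemma gD2 (R : fieldType) (N M d : R) : N + 1 != 0 -> N + 2 != 0 ->
  d * (N + 1 + 2 * M) / (N + 1) * (N + 1 + 1 + 2 * M) / (N + 1 + 1)
  = d * (N + 1 + 2 * M) * (N + 2 + 2 * M) / ((N + 1) * (N + 2)).
Proof. move=> h1 h2; field; apply/andP; split=> //; rewrite -addrA. Qed.

Lemma relD2 n m : ((Dn n.+2 m)%:R : rat)
   = (Dn n m)%:R * (n%:R + 1 + 2 * m%:R) * (n%:R + 2 + 2 * m%:R) / ((n%:R + 1) * (n%:R + 2)).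
Proof.
have nz2 : (n%:R + 2 : rat) != 0 by rewrite -natS2 pnatr_eq0.
have nz1 : (n%:R + 1 : rat) != 0 by rewrite -natS1 pnatr_eq0.
by rewrite relD1 relD1 (natS1 n) (@gD2 rat _ _ _ nz1 nz2).
Qed.

Lemma relE1 n m : (m.+1%:R : rat) ^+ 2 * (Dn n m.+1)%:R
   = (Dn n m)%:R * (n%:R + 2 * m%:R + 1) * (n%:R + 2 * m%:R + 2).
Proof.
have -> : (n%:R + 2 * m%:R + 1 : rat) = (n + 2 * m).+1%:R by rewrite (natS1 (n + 2 * m)) natrD natrM.
have -> : (n%:R + 2 * m%:R + 2 : rat) = (n + 2 * m).+2%:R by rewrite (natS2 (n + 2 * m)) natrD natrM.
by rewrite expr2 -!natrM Dn_mS mulnC mulnA.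
Qed.

Lemma gT0 (R : fieldType) (N M B s0 C0 C1 q : R) :
  N + 1 != 0 -> N + 2 != 0 -> (16 : R) != 0 ->
  q = -4 * (-4 * s0) -> C1 = B * (N + 2 - M) / (N + 2) -> C0 = C1 * (N + 1 - M) / (N + 1) ->
  s0 * C0 = B * (N + 2 - M) * (N + 1 - M) * q / (16 * (N + 1) * (N + 2)).
Proof. move=> h1 h2 h16 eq e1 e0; rewrite eq e0 e1; field; by rewrite h1 h2 h16. Qed.

Lemma relT0 n m : (m <= n.+2)%N ->
  (-4) ^+ (n - m) * 'C(n, m)%:R
  = 'C(n.+2, m)%:R * (n%:R + 2 - m%:R) * (n%:R + 1 - m%:R) * (-4) ^+ (n.+2 - m)
    / (16 * (n%:R + 1) * (n%:R + 2)) :> rat.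
Proof.
move=> hm2.
have nz2 : (n%:R + 2 : rat) != 0 by rewrite -natS2 pnatr_eq0.
have nz1 : (n%:R + 1 : rat) != 0 by rewrite -natS1 pnatr_eq0.
have n16 : (16 : rat) != 0 by [].
case: (leqP m n) => hm.
  apply: (@gT0 rat _ _ _ _ _ _ _ nz1 nz2 n16 _ (rel_c1 n m) (rel_c0 n m)).
  by rewrite (subSn (leqW hm)) (subSn hm) !exprS.
rewrite bin_small // mulr0.
have [->|->] : m = n.+1 \/ m = n.+2 by lia.
  by rewrite (natS1 n) subrr mulr0 !mul0r.
by rewrite (natS2 n) subrr mulr0 !mul0r.
Qed.

Lemma gT1 (R : fieldType) (N M B s1 C1 q : R) :
  N + 2 != 0 -> (4 : R) != 0 ->
  q = -4 * s1 -> C1 = B * (N + 2 - M) / (N + 2) ->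
  s1 * C1 = - (B * (N + 2 - M) * q / (4 * (N + 2))).
Proof. move=> h2 h4 eq e1; rewrite eq e1; field; by rewrite h2 h4. Qed.

Lemma relT1 n m : (m <= n.+2)%N ->
  (-4) ^+ (n.+1 - m) * 'C(n.+1, m)%:R
  = - ('C(n.+2, m)%:R * (n%:R + 2 - m%:R) * (-4) ^+ (n.+2 - m) / (4 * (n%:R + 2))) :> rat.
Proof.
move=> hm2.
have nz2 : (n%:R + 2 : rat) != 0 by rewrite -natS2 pnatr_eq0.
have n4 : (4 : rat) != 0 by [].
case: (leqP m n.+1) => hm.
  apply: (@gT1 rat _ _ _ _ _ _ nz2 n4 _ (rel_c1 n m)).
  by rewrite (subSn hm) exprS.
have -> : m = n.+2 by lia.
by rewrite bin_small // mulr0 (natS2 n) subrr mulr0 !mul0r oppr0.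
Qed.

Lemma gGm (R : fieldType) (c M q C B d N2 : R) : N2 != 0 ->
  C = M * B / N2 -> c * M ^+ 2 * q * C * d = c * M ^+ 3 * q * B * d / N2.
Proof. move=> h e; rewrite e; field; exact: h. Qed.

Lemma relGm n m : Ge n m = cG n%:R * m%:R ^+ 3 * (-4) ^+ (n.+2 - m) * 'C(n.+2, m)%:R
                            * (Dn n m)%:R / (n%:R + 2).
Proof.
have nz2 : (n%:R + 2 : rat) != 0 by rewrite -natS2 pnatr_eq0.
case: m => [|m].
  by rewrite /Ge mulr0n !exprS !mul0r !mulr0 !mul0r.
by rewrite /Ge (_ : m.+1.-1 = m) // (@gGm rat _ _ _ _ _ _ _ nz2 (rel_d n m)).
Qed.

Lemma gGm1 (R : comNzRingType) (c a b e f : R) : c * a * b * e * f = c * (b * e) * (a * f).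
Proof. ring. Qed.

Lemma relGm1 n m : Ge n m.+1
  = cG n%:R * ((-4) ^+ (n.+1 - m) * 'C(n.+1, m)%:R) * (m.+1%:R ^+ 2 * (Dn n m.+1)%:R).
Proof. by rewrite /Ge subSS (_ : m.+1.-1 = m) // gGm1. Qed.

Lemma idE (R : fieldType) (N M B d q T0 T1 D1 D2 E1 Gm : R) :
  N + 1 != 0 -> N + 2 != 0 -> (16 : R) != 0 -> (4 : R) != 0 ->
  T0 = B * (N + 2 - M) * (N + 1 - M) * q / (16 * (N + 1) * (N + 2)) ->
  T1 = - (B * (N + 2 - M) * q / (4 * (N + 2))) ->
  D1 = d * (N + 1 + 2 * M) / (N + 1) ->
  D2 = d * (N + 1 + 2 * M) * (N + 2 + 2 * M) / ((N + 1) * (N + 2)) ->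
  E1 = d * (N + 2 * M + 1) * (N + 2 * M + 2) ->
  Gm = cG N * M ^+ 3 * q * B * d / (N + 2) ->
  (N + 1) * (ra0g N * (T0 * d) + ra1g N * (T1 * D1) + ra2g N * (q * B * D2))
  = cG N * T1 * E1 - Gm.
Proof.
move=> h1 h2 h16 h4 e0 e1 ed1 ed2 ee eg.
rewrite e0 e1 ed1 ed2 ee eg /ra0g /ra1g /ra2g /cG.
field; by rewrite h1 h2 h16 h4.
Qed.

Lemma wz_e n m : (m < n.+3)%N ->
  (n%:R + 1) * (ra0 n * Te n m + ra1 n * Te n.+1 m + ra2 n * Te n.+2 m)
  = Ge n m.+1 - Ge n m.
Proof.
move=> hm.
have nz2 : (n%:R + 2 : rat) != 0 by rewrite -natS2 pnatr_eq0.
have nz1 : (n%:R + 1 : rat) != 0 by rewrite -natS1 pnatr_eq0.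
have n16 : (16 : rat) != 0 by [].
have n4 : (4 : rat) != 0 by [].
rewrite /ra0 /ra1 /ra2 /Te relGm1.
exact: (@idE rat _ _ _ _ _ _ _ _ _ _ _ nz1 nz2 n16 n4 (relT0 n m hm) (relT1 n m hm)
          (relD1 n m) (relD2 n m) (relE1 n m) (relGm n m)).
Qed.

Definition fs (n : nat) : rat := \sum_(k < n.+1) Tf n k.
Definition es (n : nat) : rat := \sum_(m < n.+1) Te n m.

Lemma fs_rec n : ra0 n * fs n + ra1 n * fs n.+1 + ra2 n * fs n.+2 = 0.
Proof.
apply: (@wz_rec Tf Gfr (fun n => (n%:R + 1) ^+ 2)).
- by move=> k m hm; rewrite /Tf bin_small // exprS mul0r.
- by move=> m _; rewrite wz_franel.
- by rewrite /Gfr bin_small // exprS !mul0r.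
- by [].
- by rewrite expf_neq0 // -natS1 pnatr_eq0.
Qed.

Lemma es_rec n : ra0 n * es n + ra1 n * es n.+1 + ra2 n * es n.+2 = 0.
Proof.
apply: (@wz_rec Te Ge (fun n => (n%:R + 1))).
- by move=> k m hm; rewrite /Te bin_small // mulr0 mul0r.
- by move=> m hm; rewrite wz_e.
- by rewrite /Ge /= bin_small // mulr0 mul0r.
- by rewrite /Ge mulr0n exprS !mul0r !mulr0 !mul0r.
- by rewrite -natS1 pnatr_eq0.
Qed.

Lemma seq_eq (x y : nat -> rat) : x 0%N = y 0%N -> x 1%N = y 1%N ->
  (forall n, ra0 n * x n + ra1 n * x n.+1 + ra2 n * x n.+2 = 0) ->
  (forall n, ra0 n * y n + ra1 n * y n.+1 + ra2 n * y n.+2 = 0) ->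
  forall n, x n = y n.
Proof.
move=> h0 h1 hx hy.
suff: forall n, x n = y n /\ x n.+1 = y n.+1 by move=> S n; case: (S n).
elim=> [|n [IH1 IH2]]; first by [].
split=> //.
have nz : ra2 n != 0 by rewrite /ra2 /ra2g expf_neq0 // -natS2 pnatr_eq0.
apply: (mulfI nz).
have e1 := hx n; have e2 := hy n.
rewrite IH1 IH2 in e1.
by apply: (addrI (ra0 n * y n + ra1 n * y n.+1)); rewrite e1 e2.
Qed.

Lemma init0 : fs 0%N = es 0%N.
Proof. by rewrite /fs /es !big_ord1 /Tf /Te /Dn /= expr1n expr0 !mul1r. Qed.

Lemma init1 : fs 1%N = es 1%N.
Proof.
rewrite /fs /es !big_ord_recr !big_ord0 /= /Tf /Te /Dn /=.
rewrite (_ : ('C(1 + 2 * 0, 1) * 'C(2 * 0, 0))%N = 1%N) //.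
Qed.

Lemma fs_es n : fs n = es n.
Proof. exact: (@seq_eq fs es init0 init1 fs_rec es_rec n). Qed.

Lemma fs_franel n : fs n = (franel n)%:R.
Proof.
rewrite /fs /franel natr_sum; apply: eq_bigr => k _.
by rewrite /Tf natrX.
Qed.

Lemma M4_diag n m : (m <= n)%N -> M4 (n - m) m m m = ('C(n, m) * Dn n m)%N.
Proof.
move=> hm; symmetry; apply: M4_unique.
have h1 := @bin_fact n m hm.
have -> : ((n - m) + (m + (m + m)) = n + 2 * m)%N by lia.
rewrite -Dn_fact -h1; ring.
Qed.

Lemma intrX4 t : ((((-4) ^+ t : int))%:~R : rat) = (-4) ^+ t.
Proof.
elim: t => [|t IH]; first by rewrite !expr0.
by rewrite !exprS intrM IH.
Qed.

Lemma Ef_es n : ((Ef n n n)%:~R : rat) = es n.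
Proof.
rewrite /Ef (big_morph (fun x : int => (x%:~R : rat)) (@intrD _) (mulr0z _)).
rewrite (reindex_inj rev_ord_inj) /=.
rewrite /es; apply: eq_bigr => m _.
rewrite subSS intrM intrX4 /W.
have hm : (m <= n)%N by have := ltn_ord m; lia.
rewrite ifT; last by apply/and3P; split; lia.
rewrite (_ : (n - (n - m) = m)%N); last by lia.
by rewrite M4_diag // /Te -mulrA -natrM pmulrn.
Qed.

Theorem mainTheorem8 :
  (exists G : series3, smul G denom = sone) /\
  (forall G : series3, smul G denom = sone ->
     (forall n : nat, G n n n = (franel n)%:Z) /\
     (forall n1 n2 n3 : nat, G n1 n2 n3 = prodpoly n1 n2 n3 n1 n2 n3)).
Proof.
split; first by exists Ef; apply/denom_iff; exact: Ef_rec.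
move=> G /denom_iff hG.
have GE := @rec_unique G Ef hG Ef_rec.
split.
  move=> n; rewrite GE; apply: (@intr_inj rat).
  by rewrite Ef_es -fs_es fs_franel.
move=> n1 n2 n3; rewrite GE prodpolyE.
by rewrite -(@rec_unique Qf Ef Qf_rec Ef_rec).
Qed.
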